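(* There exists a subset $\mathcal{A}\subseteq\mathbb{Z}$ which is not recursive, is closed in the profinite topology of $\mathbb{Z}$, and such that the function $n\mapsto\mathcal{A}\bmod n$ (for $n\ge1$) is recursive.
   Context: $\mathcal{A}\bmod n=\{r\in\{0,\dots,n-1\}:\exists x\in\mathcal{A},\ x\equiv r\bmod n\}$. The profinite topology on $\mathbb{Z}$ has as basis of open sets the arithmetic progressions $m+p\mathbb{Z}$ ($m\in\mathbb{Z}$, $p\ge1$). *)

(* Defs.v *)
From Stdlib Require Import ZArith Arith List.
Import ListNotations.

Inductive code : Type :=
| CZero : code
| CSucc : code
| CProj : nat -> code                 (* i-th argument (0 if absent) *)
| CComp : code -> list code -> code
| CPrec : code -> code -> code
| CMu   : code -> code.

Inductive eval : code -> list nat -> nat -> Prop :=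
| ev_zero : forall v, eval CZero v 0
| ev_succ : forall x v, eval CSucc (x :: v) (S x)
| ev_proj : forall i v, eval (CProj i) v (nth i v 0)
| ev_comp : forall f gs v ys y,
    eval_list gs v ys -> eval f ys y -> eval (CComp f gs) v y
| ev_prec0 : forall f g v y, eval f v y -> eval (CPrec f g) (0 :: v) y
| ev_precS : forall f g n v z y,
    eval (CPrec f g) (n :: v) z -> eval g (n :: z :: v) y ->
    eval (CPrec f g) (S n :: v) y
| ev_mu : forall f v y,
    eval f (y :: v) 0 ->
    (forall k, k < y -> exists m, eval f (k :: v) (S m)) ->
    eval (CMu f) v y
with eval_list : list code -> list nat -> list nat -> Prop :=
| evl_nil : forall v, eval_list [] v []
| evl_cons : forall g gs v y ys,
    eval g v y -> eval_list gs v ys -> eval_list (g :: gs) v (y :: ys).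

(* Standard bijective coding of Z into nat: 0,-1,1,-2,2,... -> 0,1,2,3,4,... *)
Definition z2n (z : Z) : nat :=
  if (0 <=? z)%Z then Z.to_nat (2 * z) else Z.to_nat (- 2 * z - 1).

Definition recursive_set (A : Z -> Prop) : Prop :=
  exists c : code, forall z : Z,
    (A z -> eval c [z2n z] 1) /\ (~ A z -> eval c [z2n z] 0).

Definition arith_prog (m p : Z) (x : Z) : Prop := exists k : Z, x = (m + p * k)%Z.

Definition profinite_open (U : Z -> Prop) : Prop :=
  forall x, U x -> exists m p : Z, (1 <= p)%Z /\ arith_prog m p x /\
    (forall y, arith_prog m p y -> U y).

Definition profinite_closed (A : Z -> Prop) : Prop :=
  profinite_open (fun x => ~ A x).

Definition set_mod (A : Z -> Prop) (n : nat) (r : nat) : Prop :=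
  r < n /\ exists x : Z, A x /\ (x mod Z.of_nat n)%Z = Z.of_nat r.

(* The function n |-> A mod n (n >= 1) is recursive: a total mu-recursive
   program outputs, on input n >= 1, the code sum_{r in A mod n} 2^r
   (i.e. bit r of the output is set iff r is in A mod n). *)
Definition recursive_mod_function (A : Z -> Prop) : Prop :=
  exists c : code, forall n : nat, 1 <= n ->
    exists s : nat, eval c [n] s /\
      (forall r : nat, Nat.testbit s r = true <-> set_mod A n r).

(* Main.v *)
Require Import Defs.
From Stdlib Require Import ZArith Arith List Lia Bool Factorial Classical.
Import ListNotations.

Fixpoint sem (c : code) (v : list nat) {struct c} : nat :=
  match c with
  | CZero => 0
  | CSucc => S (hd 0 v)
  | CProj i => nth i v 0
  | CComp f gs => sem f (map (fun g => sem g v) gs)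
  | CPrec f g => match v with
                 | [] => 0
                 | n :: w => nat_rect (fun _ => nat) (sem f w) (fun m z => sem g (m :: z :: w)) n
                 end
  | CMu _ => 0
  end.

Fixpoint okb (c : code) : bool :=
  match c with
  | CZero => true
  | CProj _ => true
  | CComp f gs =>
      forallb okb gs &&
      (okb f || (match f with CSucc => true | CPrec a b => okb a && okb b | _ => false end
                 && match gs with [] => false | _ => true end))
  | _ => false
  end.

Definition okp (c : code) : bool :=
  match c with CSucc => true | CPrec a b => okb a && okb b | _ => false end.

Section CI.
Variable P : code -> Prop.
Hypothesis Hz : P CZero.
Hypothesis Hs : P CSucc.
Hypothesis Hp : forall i, P (CProj i).
Hypothesis Hc : forall f gs, P f -> Forall P gs -> P (CComp f gs).
Hypothesis Hpr : forall f g, P f -> P g -> P (CPrec f g).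
Hypothesis Hm : forall f, P f -> P (CMu f).
Fixpoint code_ind' (c : code) : P c :=
  match c with
  | CZero => Hz | CSucc => Hs | CProj i => Hp i
  | CComp f gs => Hc f gs (code_ind' f)
      ((fix L (l : list code) : Forall P l :=
          match l with [] => Forall_nil P | g :: l' => Forall_cons g (code_ind' g) (L l') end) gs)
  | CPrec f g => Hpr f g (code_ind' f) (code_ind' g)
  | CMu f => Hm f (code_ind' f)
  end.
End CI.

Lemma prec_eval f g (Hf : forall v, eval f v (sem f v)) (Hg : forall v, eval g v (sem g v)) :
  forall n w, eval (CPrec f g) (n :: w) (nat_rect (fun _ => nat) (sem f w) (fun m z => sem g (m :: z :: w)) n).
Proof.
  induction n; intros w; simpl.
  - constructor; auto.
  - econstructor; eauto.
Qed.

Lemma okb_sound_gen : forall c,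
  (okb c = true -> forall v, eval c v (sem c v)) /\
  (okp c = true -> forall n w, eval c (n :: w) (sem c (n :: w))).
Proof.
  apply code_ind'; simpl; intros; try (split; intros; discriminate).
  - split; intros; [constructor|discriminate].
  - split; intros; [discriminate|constructor].
  - split; intros; [constructor|discriminate].
  - split; [|intros; discriminate]. intros H1 v.
    apply andb_true_iff in H1 as [Hgs Hf].
    assert (HL : eval_list gs v (map (fun g => sem g v) gs)).
    { clear Hf H. induction gs as [|g gs IH]; simpl in *.
      - constructor.
      - apply andb_true_iff in Hgs as [Hg Hgs]. inversion H0 as [|? ? [Hg1 _] HF]; subst. constructor; auto. }
    econstructor; [exact HL|].
    apply orb_true_iff in Hf as [Hf|Hf].
    + apply H; exact Hf.
    + apply andb_true_iff in Hf as [Hf Hne]. destruct gs; [discriminate|]. simpl.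
      apply H. destruct f; try discriminate; simpl; auto.
  - split; intros; [discriminate|].
    apply andb_true_iff in H1 as [Ha Hb]. apply prec_eval.
    + apply H; auto.
    + apply H0; auto.
Qed.

Lemma okb_sound c : okb c = true -> forall v, eval c v (sem c v).
Proof. apply okb_sound_gen. Qed.

Notation X i := (CProj i).
Definition ap (c : code) (l : list code) := CComp c l.

Lemma sem_ap c l v : sem (ap c l) v = sem c (map (fun g => sem g v) l).
Proof. reflexivity. Qed.

Lemma prec_spec (F : nat -> nat) g h n w :
  sem g w = F 0 -> (forall m, sem h (m :: F m :: w) = F (S m)) ->
  sem (CPrec g h) (n :: w) = F n.
Proof. intros H0 HS; simpl. induction n; simpl; [auto|]. rewrite IHn; auto. Qed.

Definition ifz (x a b : nat) := match x with 0 => a | S _ => b end.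
Definition dist (a b : nat) := (a - b) + (b - a).

Definition c_S := ap CSucc [X 0].
Lemma sem_S x w : sem c_S (x :: w) = S x. Proof. reflexivity. Qed.
Opaque c_S.
Definition c_add := CPrec (X 0) (ap c_S [X 1]).
Lemma sem_add x y w : sem c_add (x :: y :: w) = x + y.
Proof. apply (prec_spec (fun n => n + y)); [reflexivity|]. intros; rewrite sem_ap; simpl; rewrite sem_S; reflexivity. Qed.
Opaque c_add.
Definition c_pred := CPrec CZero (X 0).
Lemma sem_pred x w : sem c_pred (x :: w) = pred x.
Proof. apply (prec_spec pred); reflexivity. Qed.
Opaque c_pred.
Definition c_subr := CPrec (X 0) (ap c_pred [X 1]).
Lemma sem_subr b a w : sem c_subr (b :: a :: w) = a - b.
Proof. apply (prec_spec (fun n => a - n)); [simpl; lia|]. intros m. rewrite sem_ap; simpl; rewrite sem_pred. lia. Qed.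
Opaque c_subr.
Definition c_sub := ap c_subr [X 1; X 0].
Lemma sem_sub a b w : sem c_sub (a :: b :: w) = a - b.
Proof. unfold c_sub. rewrite sem_ap. simpl. apply sem_subr. Qed.
Opaque c_sub.
Definition c_mul := CPrec CZero (ap c_add [X 1; X 2]).
Lemma sem_mul x y w : sem c_mul (x :: y :: w) = x * y.
Proof. apply (prec_spec (fun n => n * y)); [reflexivity|]. intros m. rewrite sem_ap; simpl; rewrite sem_add. lia. Qed.
Opaque c_mul.
Definition c_ifz := CPrec (X 0) (X 3).
Lemma sem_ifz x a b w : sem c_ifz (x :: a :: b :: w) = ifz x a b.
Proof. apply (prec_spec (fun n => ifz n a b)); reflexivity. Qed.
Opaque c_ifz.
Definition c_dist := ap c_add [ap c_sub [X 0; X 1]; ap c_sub [X 1; X 0]].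
Lemma sem_dist a b w : sem c_dist (a :: b :: w) = dist a b.
Proof. unfold c_dist. rewrite !sem_ap. simpl. rewrite !sem_sub, sem_add. reflexivity. Qed.
Opaque c_dist.

Global Hint Rewrite sem_S sem_add sem_pred sem_sub sem_mul sem_ifz sem_dist : semdb.
Opaque c_S c_add c_pred c_subr c_sub c_mul c_ifz c_dist.
Ltac ssem := simpl; autorewrite with semdb; simpl.

Fixpoint tri k := match k with 0 => 0 | S k => tri k + S k end.
Fixpoint kk n := match n with 0 => 0 | S m => ifz (tri (S (kk m)) - S m) (S (kk m)) (kk m) end.
Definition snd' n := n - tri (kk n).
Definition fst' n := kk n - snd' n.
Definition pr a b := tri (a + b) + b.

Definition c_tri := CPrec CZero (ap c_add [X 1; ap c_S [X 0]]).
Lemma sem_tri k w : sem c_tri (k :: w) = tri k.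
Proof. apply prec_spec; [reflexivity|]. intros; ssem; reflexivity. Qed.
Opaque c_tri. Global Hint Rewrite sem_tri : semdb.
Definition c_kk := CPrec CZero (ap c_ifz [ap c_sub [ap c_tri [ap c_S [X 1]]; ap c_S [X 0]]; ap c_S [X 1]; X 1]).
Lemma sem_kk n w : sem c_kk (n :: w) = kk n.
Proof. apply prec_spec; [reflexivity|]. intros; ssem; reflexivity. Qed.
Opaque c_kk. Global Hint Rewrite sem_kk : semdb.
Definition c_snd := ap c_sub [X 0; ap c_tri [ap c_kk [X 0]]].
Lemma sem_snd n w : sem c_snd (n :: w) = snd' n.
Proof. unfold c_snd; ssem; reflexivity. Qed.
Opaque c_snd. Global Hint Rewrite sem_snd : semdb.
Definition c_fst := ap c_sub [ap c_kk [X 0]; ap c_snd [X 0]].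
Lemma sem_fst n w : sem c_fst (n :: w) = fst' n.
Proof. unfold c_fst; ssem; reflexivity. Qed.
Opaque c_fst. Global Hint Rewrite sem_fst : semdb.
Definition c_pr := ap c_add [ap c_tri [ap c_add [X 0; X 1]]; X 1].
Lemma sem_pr a b w : sem c_pr (a :: b :: w) = pr a b.
Proof. unfold c_pr; ssem; reflexivity. Qed.
Opaque c_pr. Global Hint Rewrite sem_pr : semdb.

Lemma tri_mono k j : k < j -> tri (S k) <= tri j.
Proof. induction 1; simpl in *; lia. Qed.

Lemma kk_spec n : tri (kk n) <= n < tri (S (kk n)).
Proof.
  induction n as [|m IH]; [simpl; lia|].
  cbn [kk]. remember (kk m) as k. unfold ifz.
  destruct (tri (S k) - S m) eqn:E.
  - simpl in *. lia.
  - simpl in *. lia.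
Qed.

Lemma kk_unique n k : tri k <= n < tri (S k) -> kk n = k.
Proof.
  intros Hk. pose proof (kk_spec n).
  destruct (lt_eq_lt_dec (kk n) k) as [[H1|H1]|H1]; auto.
  - apply tri_mono in H1. lia.
  - apply tri_mono in H1. lia.
Qed.

Lemma kk_pr a b : kk (pr a b) = a + b.
Proof. apply kk_unique. unfold pr. simpl. lia. Qed.
Lemma snd_pr a b : snd' (pr a b) = b.
Proof. unfold snd'. rewrite kk_pr. unfold pr. lia. Qed.
Lemma fst_pr a b : fst' (pr a b) = a.
Proof. unfold fst'. rewrite snd_pr, kk_pr. lia. Qed.
Lemma pr00 : pr 0 0 = 0. Proof. reflexivity. Qed.
Lemma fst0 : fst' 0 = 0. Proof. reflexivity. Qed.
Lemma snd0 : snd' 0 = 0. Proof. reflexivity. Qed.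

Opaque c_S c_add c_pred c_subr c_sub c_mul c_ifz c_dist c_tri c_kk c_snd c_fst c_pr.

Fixpoint num n := match n with 0 => CZero | S n => ap c_S [num n] end.
Lemma sem_num n v : sem (num n) v = n.
Proof. induction n; simpl; auto. rewrite sem_S; auto. Qed.
Global Hint Rewrite sem_num : semdb.

Definition hd' l := fst' (pred l).
Definition tl' l := snd' (pred l).
Definition cons' x l := S (pr x l).
Fixpoint tls i l := match i with 0 => l | S i => tl' (tls i l) end.
Definition nth' i l := hd' (tls i l).
Definition ifeq x k a b := ifz (dist x k) a b.

Definition c_hd := ap c_fst [ap c_pred [X 0]].
Lemma sem_hd l w : sem c_hd (l :: w) = hd' l. Proof. unfold c_hd; ssem; reflexivity. Qed.
Opaque c_hd. Global Hint Rewrite sem_hd : semdb.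
Definition c_tl := ap c_snd [ap c_pred [X 0]].
Lemma sem_tl l w : sem c_tl (l :: w) = tl' l. Proof. unfold c_tl; ssem; reflexivity. Qed.
Opaque c_tl. Global Hint Rewrite sem_tl : semdb.
Definition c_cons := ap c_S [ap c_pr [X 0; X 1]].
Lemma sem_cons x l w : sem c_cons (x :: l :: w) = cons' x l. Proof. unfold c_cons; ssem; reflexivity. Qed.
Opaque c_cons. Global Hint Rewrite sem_cons : semdb.
Definition c_tls := CPrec (X 0) (ap c_tl [X 1]).
Lemma sem_tls i l w : sem c_tls (i :: l :: w) = tls i l.
Proof. apply (prec_spec (fun n => tls n l)); [reflexivity|]. intros; ssem; reflexivity. Qed.
Opaque c_tls. Global Hint Rewrite sem_tls : semdb.
Definition c_nth := ap c_hd [ap c_tls [X 0; X 1]].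
Lemma sem_nth i l w : sem c_nth (i :: l :: w) = nth' i l. Proof. unfold c_nth; ssem; reflexivity. Qed.
Opaque c_nth. Global Hint Rewrite sem_nth : semdb.

Definition c_ifeq x k a b := ap c_ifz [ap c_dist [x; num k]; a; b].
Lemma sem_ifeq x k a b v : sem (c_ifeq x k a b) v = ifeq (sem x v) k (sem a v) (sem b v).
Proof. unfold c_ifeq; ssem; reflexivity. Qed.
Global Hint Rewrite sem_ifeq : semdb.

Definition Ev c v K := pr 0 (pr c (pr v K)).
Definition EvL gs v K := pr 1 (pr gs (pr v K)).
Definition Ret y K := pr 2 (pr y K).
Definition FL1 gs v := pr 0 (pr gs v).
Definition FL2 y := pr 1 y.
Definition FComp f := pr 2 f.
Definition FPrec g m w := pr 3 (pr g (pr m w)).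
Definition FMu f w k := pr 4 (pr f (pr w k)).

Definition e_pr a b := ap c_pr [a; b].
Definition e_Ev c v K := e_pr (num 0) (e_pr c (e_pr v K)).
Definition e_EvL c v K := e_pr (num 1) (e_pr c (e_pr v K)).
Definition e_Ret y K := e_pr (num 2) (e_pr y K).
Definition e_cons x l := ap c_cons [x; l].
Definition e_fst x := ap c_fst [x].
Definition e_snd x := ap c_snd [x].
Definition e_hd x := ap c_hd [x].
Definition e_tl x := ap c_tl [x].

Definition precStep c v K ca :=
  ifz (hd' v) (Ev (fst' ca) (tl' v) K)
      (Ev c (cons' (pred (hd' v)) (tl' v)) (cons' (FPrec (snd' ca) (pred (hd' v)) (tl' v)) K)).
Definition c_precStep :=
  ap c_ifz [e_hd (X 1); e_Ev (e_fst (X 3)) (e_tl (X 1)) (X 2);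
    e_Ev (X 0) (e_cons (ap c_pred [e_hd (X 1)]) (e_tl (X 1)))
         (e_cons (e_pr (num 3) (e_pr (e_snd (X 3)) (e_pr (ap c_pred [e_hd (X 1)]) (e_tl (X 1))))) (X 2))].
Lemma sem_precStep c v K ca w : sem c_precStep (c :: v :: K :: ca :: w) = precStep c v K ca.
Proof. unfold c_precStep; ssem; reflexivity. Qed.
Opaque c_precStep. Global Hint Rewrite sem_precStep : semdb.

Definition stepEv2 c v K ct ca :=
  ifz ct (Ret 0 K)
  (ifeq ct 1 (Ret (S (hd' v)) K)
  (ifeq ct 2 (Ret (nth' ca v) K)
  (ifeq ct 3 (EvL (snd' ca) v (cons' (FComp (fst' ca)) K))
  (ifeq ct 4 (precStep c v K ca) (Ev ca (cons' 0 v) (cons' (FMu ca v 0) K)))))).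
Definition c_stepEv2 :=
  ap c_ifz [X 3; e_Ret (num 0) (X 2);
  c_ifeq (X 3) 1 (e_Ret (ap c_S [e_hd (X 1)]) (X 2))
  (c_ifeq (X 3) 2 (e_Ret (ap c_nth [X 4; X 1]) (X 2))
  (c_ifeq (X 3) 3 (e_EvL (e_snd (X 4)) (X 1) (e_cons (e_pr (num 2) (e_fst (X 4))) (X 2)))
  (c_ifeq (X 3) 4 (ap c_precStep [X 0; X 1; X 2; X 4])
     (e_Ev (X 4) (e_cons (num 0) (X 1)) (e_cons (e_pr (num 4) (e_pr (X 4) (e_pr (X 1) (num 0)))) (X 2))))))].
Lemma sem_stepEv2 c v K ct ca w : sem c_stepEv2 (c :: v :: K :: ct :: ca :: w) = stepEv2 c v K ct ca.
Proof. unfold c_stepEv2; ssem; reflexivity. Qed.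
Opaque c_stepEv2. Global Hint Rewrite sem_stepEv2 : semdb.

Definition stepEv r := stepEv2 (fst' r) (fst' (snd' r)) (snd' (snd' r)) (fst' (fst' r)) (snd' (fst' r)).
Definition c_stepEv := ap c_stepEv2 [e_fst (X 0); e_fst (e_snd (X 0)); e_snd (e_snd (X 0));
                                     e_fst (e_fst (X 0)); e_snd (e_fst (X 0))].
Lemma sem_stepEv r w : sem c_stepEv (r :: w) = stepEv r.
Proof. unfold c_stepEv; ssem; reflexivity. Qed.
Opaque c_stepEv. Global Hint Rewrite sem_stepEv : semdb.

Definition stepEvL1 gs v K := ifz gs (Ret 0 K) (Ev (hd' gs) v (cons' (FL1 (tl' gs) v) K)).
Definition stepEvL r := stepEvL1 (fst' r) (fst' (snd' r)) (snd' (snd' r)).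
Definition c_stepEvL :=
  ap (ap c_ifz [X 0; e_Ret (num 0) (X 2);
        e_Ev (e_hd (X 0)) (X 1) (e_cons (e_pr (num 0) (e_pr (e_tl (X 0)) (X 1))) (X 2))])
     [e_fst (X 0); e_fst (e_snd (X 0)); e_snd (e_snd (X 0))].
Lemma sem_stepEvL r w : sem c_stepEvL (r :: w) = stepEvL r.
Proof. unfold c_stepEvL; ssem; reflexivity. Qed.
Opaque c_stepEvL. Global Hint Rewrite sem_stepEvL : semdb.

Definition muFr y f w k K' := ifz y (Ret k K') (Ev f (cons' (S k) w) (cons' (FMu f w (S k)) K')).
Definition stepFr1 y ft fa K' :=
  ifz ft (EvL (fst' fa) (snd' fa) (cons' (FL2 y) K'))
  (ifeq ft 1 (Ret (cons' fa y) K')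
  (ifeq ft 2 (Ev fa y K')
  (ifeq ft 3 (Ev (fst' fa) (cons' (fst' (snd' fa)) (cons' y (snd' (snd' fa)))) K')
     (muFr y (fst' fa) (fst' (snd' fa)) (snd' (snd' fa)) K')))).
Definition c_muFr := (* env y f w k K' *)
  ap c_ifz [X 0; e_Ret (X 3) (X 4);
     e_Ev (X 1) (e_cons (ap c_S [X 3]) (X 2)) (e_cons (e_pr (num 4) (e_pr (X 1) (e_pr (X 2) (ap c_S [X 3])))) (X 4))].
Lemma sem_muFr y f w k K' l : sem c_muFr (y :: f :: w :: k :: K' :: l) = muFr y f w k K'.
Proof. unfold c_muFr; ssem; reflexivity. Qed.
Opaque c_muFr. Global Hint Rewrite sem_muFr : semdb.
Definition c_stepFr1 := (* env y ft fa K' *)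
  ap c_ifz [X 1; e_EvL (e_fst (X 2)) (e_snd (X 2)) (e_cons (e_pr (num 1) (X 0)) (X 3));
  c_ifeq (X 1) 1 (e_Ret (e_cons (X 2) (X 0)) (X 3))
  (c_ifeq (X 1) 2 (e_Ev (X 2) (X 0) (X 3))
  (c_ifeq (X 1) 3 (e_Ev (e_fst (X 2)) (e_cons (e_fst (e_snd (X 2))) (e_cons (X 0) (e_snd (e_snd (X 2))))) (X 3))
     (ap c_muFr [X 0; e_fst (X 2); e_fst (e_snd (X 2)); e_snd (e_snd (X 2)); X 3])))].
Lemma sem_stepFr1 y ft fa K' l : sem c_stepFr1 (y :: ft :: fa :: K' :: l) = stepFr1 y ft fa K'.
Proof. unfold c_stepFr1; ssem; reflexivity. Qed.
Opaque c_stepFr1. Global Hint Rewrite sem_stepFr1 : semdb.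

Definition stepRet s r := ifz (snd' r) s (stepFr1 (fst' r) (fst' (hd' (snd' r))) (snd' (hd' (snd' r))) (tl' (snd' r))).
Definition step s := ifz (fst' s) (stepEv (snd' s)) (ifeq (fst' s) 1 (stepEvL (snd' s)) (stepRet s (snd' s))).
Definition c_step :=
  ap c_ifz [e_fst (X 0); ap c_stepEv [e_snd (X 0)];
   c_ifeq (e_fst (X 0)) 1 (ap c_stepEvL [e_snd (X 0)])
     (ap c_ifz [e_snd (e_snd (X 0)); X 0;
        ap c_stepFr1 [e_fst (e_snd (X 0)); e_fst (e_hd (e_snd (e_snd (X 0))));
                      e_snd (e_hd (e_snd (e_snd (X 0)))); e_tl (e_snd (e_snd (X 0)))]])].
Lemma sem_step s w : sem c_step (s :: w) = step s.
Proof. unfold c_step; ssem; reflexivity. Qed.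
Opaque c_step. Global Hint Rewrite sem_step : semdb.

Definition run s0 n := Nat.iter n step s0.
Definition c_run := CPrec (X 0) (ap c_step [X 1]).
Lemma sem_run n s0 w : sem c_run (n :: s0 :: w) = run s0 n.
Proof. apply (prec_spec (fun n => run s0 n)); [reflexivity|]. intros; ssem; reflexivity. Qed.
Opaque c_run. Global Hint Rewrite sem_run : semdb.

Fixpoint encl (l : list nat) : nat := match l with [] => 0 | x :: l => cons' x (encl l) end.
Fixpoint enc (c : code) : nat :=
  match c with
  | CZero => pr 0 0 | CSucc => pr 1 0 | CProj i => pr 2 i
  | CComp f gs => pr 3 (pr (enc f) (encl (map enc gs)))
  | CPrec f g => pr 4 (pr (enc f) (enc g))
  | CMu f => pr 5 (enc f)
  end.

Lemma hd_cons x l : hd' (cons' x l) = x.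
Proof. unfold hd', cons'. simpl. apply fst_pr. Qed.
Lemma tl_cons x l : tl' (cons' x l) = l.
Proof. unfold tl', cons'. simpl. apply snd_pr. Qed.
Lemma hd0 : hd' 0 = 0. Proof. reflexivity. Qed.
Lemma tl0 : tl' 0 = 0. Proof. reflexivity. Qed.
Lemma tls_S i l : tls (S i) l = tls i (tl' l).
Proof. induction i; simpl in *; try rewrite IHi; reflexivity. Qed.
Lemma tls_0 i : tls i 0 = 0.
Proof. induction i; simpl; auto. rewrite IHi; reflexivity. Qed.
Lemma nth_encl i v : nth' i (encl v) = nth i v 0.
Proof.
  unfold nth'. revert v. induction i; intros v.
  - destruct v; simpl; [reflexivity|apply hd_cons].
  - destruct v as [|x v].
    + rewrite tls_0. destruct (S i); reflexivity.
    + rewrite tls_S. simpl encl. rewrite tl_cons. apply IHi.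
Qed.

Definition star s s' := exists n, run s n = s'.
Lemma star_refl s : star s s. Proof. exists 0; reflexivity. Qed.
Lemma run_add s a b : run s (a + b) = run (run s a) b.
Proof. unfold run. rewrite Nat.add_comm. apply Nat.iter_add. Qed.
Lemma star_trans a b c : star a b -> star b c -> star a c.
Proof. intros [n H] [m H']. exists (n + m). rewrite run_add, H; auto. Qed.
Lemma star_step a b c : step a = b -> star b c -> star a c.
Proof. intros H [m H']. exists (1 + m). rewrite run_add. simpl. rewrite H; auto. Qed.

Opaque pr.
Ltac stp := unfold step, stepEv, stepEv2, stepEvL, stepEvL1, stepRet, stepFr1, muFr, precStep,
  Ev, EvL, Ret, FL1, FL2, FComp, FPrec, FMu;
  repeat (rewrite ?fst_pr, ?snd_pr, ?hd_cons, ?tl_cons; simpl).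

Lemma complete :
  forall c v y, eval c v y -> forall K, star (Ev (enc c) (encl v) K) (Ret y K)
with complete_list :
  forall gs v ys, eval_list gs v ys -> forall K, star (EvL (encl (map enc gs)) (encl v) K) (Ret (encl ys) K).
Proof.
  - intros c v y d. destruct d as [v0|x v0|i v0|f gs v0 ys y0 Hl Hf|f g v0 y0 Hf|f g n v0 z y0 Hp Hg|f v0 y0 H0 H]; intros K.
    + apply star_step with (Ret 0 K); [stp; reflexivity|apply star_refl].
    + apply star_step with (Ret (S x) K); [stp; reflexivity|apply star_refl].
    + apply star_step with (Ret (nth i v0 0) K); [stp; rewrite nth_encl; reflexivity|apply star_refl].
    + eapply star_step; [stp; reflexivity|].
      eapply star_trans; [apply (complete_list _ _ _ Hl)|].
      eapply star_step; [stp; reflexivity|]. apply (complete _ _ _ Hf).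
    + eapply star_step; [stp; reflexivity|]. apply (complete _ _ _ Hf).
    + eapply star_step; [stp; reflexivity|].
      eapply star_trans; [apply (complete _ _ _ Hp)|].
      eapply star_step; [stp; reflexivity|]. apply (complete _ _ _ Hg).
    +       assert (HH : forall k, k < y0 -> forall K, exists m, star (Ev (enc f) (encl (k :: v0)) K) (Ret (S m) K)).
      { intros k hk K0. destruct (H k hk) as [m dm]. exists m. apply (complete _ _ _ dm). }
      clear H.
      eapply star_step; [stp; reflexivity|].
      assert (L : forall j, j <= y0 -> star (Ev (enc f) (encl ((y0 - j) :: v0)) (cons' (FMu (enc f) (encl v0) (y0 - j)) K)) (Ret y0 K)).
      { intros j. induction j; intros hj.
        - rewrite Nat.sub_0_r. eapply star_trans; [apply (complete _ _ _ H0)|].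
          eapply star_step; [stp; reflexivity|apply star_refl].
        - destruct (HH (y0 - S j) ltac:(lia) (cons' (FMu (enc f) (encl v0) (y0 - S j)) K)) as [m Hm].
          eapply star_trans; [apply Hm|].
          eapply star_step; [stp; reflexivity|].
          replace (S (y0 - S j)) with (y0 - j) by lia. apply IHj. lia. }
      specialize (L y0 (le_n _)). rewrite Nat.sub_diag in L. exact L.
  - intros gs v ys d. destruct d as [v0|g gs v0 y0 ys Hg Hl]; intros K.
    + eapply star_step; [stp; reflexivity|apply star_refl].
    + eapply star_step; [stp; reflexivity|].
      eapply star_trans; [apply (complete _ _ _ Hg)|].
      eapply star_step; [stp; reflexivity|].
      eapply star_trans; [apply (complete_list _ _ _ Hl)|].
      eapply star_step; [stp; reflexivity|apply star_refl].
Qed.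

Opaque c_S c_add c_pred c_subr c_sub c_mul c_ifz c_dist c_tri c_kk c_snd c_fst c_pr.
Opaque c_hd c_tl c_cons c_tls c_nth c_precStep c_stepEv2 c_stepEv c_stepEvL c_muFr c_stepFr1 c_step c_run.

Definition c_fact := CPrec (num 1) (ap c_mul [ap c_S [X 0]; X 1]).
Lemma sem_fact n w : sem c_fact (n :: w) = fact n.
Proof. apply prec_spec; [reflexivity|]. intros; ssem; reflexivity. Qed.
Opaque c_fact. Global Hint Rewrite sem_fact : semdb.
Definition c_pow2 := CPrec (num 1) (ap c_mul [num 2; X 1]).
Lemma sem_pow2 n w : sem c_pow2 (n :: w) = 2 ^ n.
Proof. apply (prec_spec (fun n => 2 ^ n)); [reflexivity|]. intros; ssem; reflexivity. Qed.
Opaque c_pow2. Global Hint Rewrite sem_pow2 : semdb.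

Definition init k := Ev k (cons' (2 * fact (S k)) 0) 0.
Definition c_init := e_Ev (X 0) (e_cons (ap c_mul [num 2; ap c_fact [ap c_S [X 0]]]) (num 0)) (num 0).
Lemma sem_init k w : sem c_init (k :: w) = init k.
Proof. unfold c_init; ssem; reflexivity. Qed.
Opaque c_init. Global Hint Rewrite sem_init : semdb.

Definition HALT1 := Ret 1 0.
Definition Hb j s := ifz (dist (run (init j) s) HALT1) 1 0.
Definition c_Hb := ap c_ifz [ap c_dist [ap c_run [X 1; ap c_init [X 0]]; e_Ret (num 1) (num 0)]; num 1; num 0].
Lemma sem_Hb j s w : sem c_Hb (j :: s :: w) = Hb j s.
Proof. unfold c_Hb; ssem; reflexivity. Qed.
Opaque c_Hb. Global Hint Rewrite sem_Hb : semdb.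

Fixpoint cnt j n := match n with 0 => 0 | S m => cnt j m + (1 - Hb j m) end.
Definition c_cnt := CPrec CZero (ap c_add [X 1; ap c_sub [num 1; ap c_Hb [X 2; X 0]]]).
Lemma sem_cnt n j w : sem c_cnt (n :: j :: w) = cnt j n.
Proof. apply (prec_spec (fun n => cnt j n)); [reflexivity|]. intros; ssem; reflexivity. Qed.
Opaque c_cnt. Global Hint Rewrite sem_cnt : semdb.

Definition rep j n := fact (S j) + ifz (Hb j n) 0 (fact (cnt j n + j + 2)).
Definition c_rep := ap c_add [ap c_fact [ap c_S [X 0]];
   ap c_ifz [ap c_Hb [X 0; X 1]; num 0; ap c_fact [ap c_add [ap c_add [ap c_cnt [X 1; X 0]; X 0]; num 2]]]].
Lemma sem_rep j n w : sem c_rep (j :: n :: w) = rep j n.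
Proof. unfold c_rep; ssem; reflexivity. Qed.
Opaque c_rep. Global Hint Rewrite sem_rep : semdb.

Fixpoint modn a n := match a with 0 => 0 | S a' => ifz (dist (S (modn a' n)) n) 0 (S (modn a' n)) end.
Definition c_modn := CPrec CZero (ap c_ifz [ap c_dist [ap c_S [X 1]; X 2]; num 0; ap c_S [X 1]]).
Lemma sem_modn a n w : sem c_modn (a :: n :: w) = modn a n.
Proof. apply (prec_spec (fun a => modn a n)); [reflexivity|]. intros; ssem; reflexivity. Qed.
Opaque c_modn. Global Hint Rewrite sem_modn : semdb.

Fixpoint sj r n m := match m with 0 => 0 | S j => sj r n j + ifz (dist (modn (rep j n) n) r) 1 0 end.
Definition c_sj := CPrec CZero (ap c_add [X 1; ap c_ifz [ap c_dist [ap c_modn [ap c_rep [X 0; X 3]; X 3]; X 2]; num 1; num 0]]).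
Lemma sem_sj m r n w : sem c_sj (m :: r :: n :: w) = sj r n m.
Proof. apply (prec_spec (fun m => sj r n m)); [reflexivity|]. intros; ssem; reflexivity. Qed.
Opaque c_sj. Global Hint Rewrite sem_sj : semdb.

Definition memb r n := ifz r 1 (ifz (sj r n n) 0 1).
Definition c_memb := ap c_ifz [X 0; num 1; ap c_ifz [ap c_sj [X 1; X 0; X 1]; num 0; num 1]].
Lemma sem_memb r n w : sem c_memb (r :: n :: w) = memb r n.
Proof. unfold c_memb; ssem; reflexivity. Qed.
Opaque c_memb. Global Hint Rewrite sem_memb : semdb.

Fixpoint sF n m := match m with 0 => 0 | S r => sF n r + memb r n * 2 ^ r end.
Definition c_sF := CPrec CZero (ap c_add [X 1; ap c_mul [ap c_memb [X 0; X 2]; ap c_pow2 [X 0]]]).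
Lemma sem_sF m n w : sem c_sF (m :: n :: w) = sF n m.
Proof. apply (prec_spec (fun m => sF n m)); [reflexivity|]. intros; ssem; reflexivity. Qed.
Opaque c_sF. Global Hint Rewrite sem_sF : semdb.

Definition c_F := ap c_sF [X 0; X 0].
Lemma sem_F n : sem c_F [n] = sF n n.
Proof. unfold c_F; ssem; reflexivity. Qed.

Transparent c_S c_add c_pred c_subr c_sub c_mul c_ifz c_dist c_tri c_kk c_snd c_fst c_pr.
Transparent c_hd c_tl c_cons c_tls c_nth c_precStep c_stepEv2 c_stepEv c_stepEvL c_muFr c_stepFr1 c_step c_run.
Transparent c_fact c_pow2 c_init c_Hb c_cnt c_rep c_modn c_sj c_memb c_sF.
Lemma okF : okb c_F = true.
Proof. vm_compute. reflexivity. Qed.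

Lemma eval_F n : eval c_F [n] (sF n n).
Proof. rewrite <- sem_F. apply okb_sound, okF. Qed.

Opaque pr.

Lemma ifz_01 x : ifz x 1 0 = 0 \/ ifz x 1 0 = 1.
Proof. destruct x; simpl; auto. Qed.
Lemma dist0 a b : dist a b = 0 <-> a = b.
Proof. unfold dist; lia. Qed.

Lemma step_halt y : step (Ret y 0) = Ret y 0.
Proof. unfold step, Ret, stepRet. rewrite !fst_pr, !snd_pr. reflexivity. Qed.
Lemma run_halt y n : run (Ret y 0) n = Ret y 0.
Proof. induction n; simpl; auto. unfold run in *. simpl. rewrite IHn. apply step_halt. Qed.
Lemma run_after s y a b : run s a = Ret y 0 -> a <= b -> run s b = Ret y 0.
Proof. intros H Hab. replace b with (a + (b - a)) by lia. rewrite run_add, H. apply run_halt. Qed.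

Lemma Hb_spec j s : (Hb j s = 1 <-> run (init j) s = HALT1) /\ (Hb j s = 0 <-> run (init j) s <> HALT1).
Proof.
  unfold Hb, ifz. destruct (dist (run (init j) s) HALT1) eqn:E.
  - apply (proj1 (dist0 _ _)) in E. split; split; intros; auto; try congruence.
  - assert (run (init j) s <> HALT1) by (intro H; apply (proj2 (dist0 _ _)) in H; congruence).
    split; split; intros; auto; congruence.
Qed.
Lemma Hb01 j s : Hb j s = 0 \/ Hb j s = 1.
Proof. apply ifz_01. Qed.
Lemma Hb_mono j s s' : Hb j s = 1 -> s <= s' -> Hb j s' = 1.
Proof. intros H Hs. apply Hb_spec in H. apply Hb_spec. eapply run_after; eauto. Qed.
Lemma Hb_mono0 j s s' : Hb j s' = 0 -> s <= s' -> Hb j s = 0.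
Proof. intros H Hs. destruct (Hb01 j s) as [|H1]; auto. pose proof (Hb_mono _ _ _ H1 Hs). lia. Qed.

Lemma cnt_stable j N N' : Hb j N = 1 -> N <= N' -> cnt j N' = cnt j N.
Proof.
  intros H Hle. induction Hle; auto. simpl. rewrite IHHle. rewrite (Hb_mono j N m); auto.
Qed.
Lemma cnt_stable2 j N N' : Hb j N = 1 -> Hb j N' = 1 -> cnt j N' = cnt j N.
Proof.
  intros H H'. destruct (le_ge_dec N N').
  - apply cnt_stable; auto.
  - symmetry. apply cnt_stable; auto.
Qed.
Lemma cnt_mono j a b : a <= b -> cnt j a <= cnt j b.
Proof. induction 1; simpl; lia. Qed.
Lemma cnt_low j n : (forall s, s < n -> Hb j s = 0) -> cnt j n = n.
Proof. induction n; intros H; simpl; auto. rewrite IHn by auto. rewrite H by lia. lia. Qed.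
Lemma cnt_lb j n N : Hb j n = 0 -> Hb j N = 1 -> n < cnt j N.
Proof.
  intros H0 H1.
  assert (n < N). { destruct (le_lt_dec N n); auto. pose proof (Hb_mono _ _ _ H1 l). lia. }
  assert (cnt j (S n) = S n). { apply cnt_low. intros s Hs. apply (Hb_mono0 j s n); auto; lia. }
  pose proof (cnt_mono j (S n) N ltac:(lia)). lia.
Qed.

Lemma modn_spec a n : 1 <= n -> modn a n = a mod n.
Proof.
  intros Hn. induction a; simpl.
  - symmetry; apply Nat.mod_0_l; lia.
  - rewrite IHa. unfold ifz. pose proof (Nat.div_mod_eq a n). pose proof (Nat.mod_upper_bound a n ltac:(lia)).
    destruct (dist (S (a mod n)) n) eqn:E.
    + apply (proj1 (dist0 _ _)) in E. apply (Nat.mod_unique _ _ (a / n + 1)); lia.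
    + assert (S (a mod n) <> n) by (intro HH; apply (proj2 (dist0 _ _)) in HH; congruence).
      apply (Nat.mod_unique _ _ (a / n)); lia.
Qed.

Lemma sj_spec r n m : sj r n m <> 0 <-> exists j, j < m /\ modn (rep j n) n = r.
Proof.
  induction m; simpl.
  - split; [lia|]. intros [j [H _]]; lia.
  - unfold ifz. destruct (dist (modn (rep m n) n) r) eqn:E.
    + apply (proj1 (dist0 _ _)) in E. split; [intros _; exists m; split; auto|lia].
    + assert (modn (rep m n) n <> r) by (intro HH; apply (proj2 (dist0 _ _)) in HH; congruence).
      rewrite Nat.add_0_r, IHm. split; intros [j [Hj Hr]]; exists j; split; auto.
      assert (j <> m) by congruence. lia.
Qed.

Lemma memb_spec r n : (memb r n = 1 <-> (r = 0 \/ exists j, j < n /\ modn (rep j n) n = r)) /\ memb r n <= 1.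
Proof.
  unfold memb. destruct r; simpl.
  - split; [split; auto|lia].
  - pose proof (sj_spec (S r) n n). destruct (sj (S r) n n); simpl.
    + split; [|lia]. split; [lia|]. intros [H1|H1]; [lia|]. apply H in H1. lia.
    + split; [|lia]. split; intros; auto. right. apply H. lia.
Qed.

Lemma sF_lt n m : sF n m < 2 ^ m.
Proof.
  induction m; simpl; [lia|]. pose proof (proj2 (memb_spec m n)).
  assert (memb m n * 2 ^ m <= 2 ^ m) by nia. lia.
Qed.

Lemma sF_decomp n m r : r < m -> exists h, sF n m = sF n r + (memb r n + 2 * h) * 2 ^ r.
Proof.
  induction m; intros Hr; [lia|]. simpl.
  destruct (Nat.eq_dec r m) as [->|Hne].
  - exists 0. lia.
  - destruct (IHm ltac:(lia)) as [h Hh]. rewrite Hh.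
    exists (h + memb m n * 2 ^ (m - r - 1)).
    assert (E: 2 ^ m = 2 ^ (m - r - 1) * 2 * 2 ^ r).
    { replace (2 ^ m) with (2 ^ ((m - r - 1) + 1 + r)) by (f_equal; lia).
      rewrite !Nat.pow_add_r. simpl. lia. }
    rewrite E. ring.
Qed.

Lemma testbit_sF n m r : Nat.testbit (sF n m) r = true <-> r < m /\ memb r n = 1.
Proof.
  destruct (le_lt_dec m r) as [Hle|Hlt].
  - split; [|lia]. intros H. exfalso.
    apply Nat.testbit_true in H. rewrite Nat.div_small in H; [simpl in H; lia|].
    pose proof (sF_lt n m). pose proof (Nat.pow_le_mono_r 2 m r ltac:(lia) Hle). lia.
  - destruct (sF_decomp n m r Hlt) as [h Hh].
    pose proof (proj2 (memb_spec r n)).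
    assert (Nat.testbit (sF n m) r = Nat.eqb (memb r n) 1).
    { apply (Nat.testbit_unique _ _ _ (sF n r) h). apply sF_lt.
      rewrite Hh. f_equal. f_equal. destruct (memb r n) as [|[|]]; simpl; lia. }
    rewrite H0, Nat.eqb_eq. split; [auto|tauto].
Qed.

Opaque pr.

Lemma fact_div_fact a b : a <= b -> Nat.divide (fact a) (fact b).
Proof.
  induction 1. apply Nat.divide_refl.
  simpl. apply Nat.divide_add_r; [exact IHle|]. apply Nat.divide_mul_r. exact IHle.
Qed.
Lemma n_div_fact n m : 1 <= n -> n <= m -> Nat.divide n (fact m).
Proof.
  intros H1 H2. destruct n; [lia|]. apply Nat.divide_trans with (fact (S n)).
  - simpl. exists (fact n). lia.
  - apply fact_div_fact; auto.
Qed.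
Lemma fact_S_lt a b : a < b -> fact (S a) < fact (S b).
Proof.
  induction 1.
  - change (fact (S (S a))) with (S (S a) * fact (S a)). pose proof (lt_O_fact (S a)). nia.
  - change (fact (S (S m))) with (S (S m) * fact (S m)). pose proof (lt_O_fact (S m)). nia.
Qed.
Lemma fact_S_inj a b : fact (S a) = fact (S b) -> a = b.
Proof.
  intros H. destruct (lt_eq_lt_dec a b) as [[H1|H1]|H1]; auto.
  - apply fact_S_lt in H1. lia.
  - apply fact_S_lt in H1. lia.
Qed.
Lemma fact_sum_ne j T k : S j < T -> fact (S j) + fact T <> fact (S k).
Proof.
  intros HT. pose proof (fact_S_lt j (pred T) ltac:(lia)). replace (S (pred T)) with T in H by lia.
  destruct (le_lt_dec (S k) T).
  - pose proof (fact_le _ _ l). pose proof (lt_O_fact (S j)). lia.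
  - pose proof (fact_le (S T) (S k) ltac:(lia)). change (fact (S T)) with (S T * fact T) in H0. nia.
Qed.
Lemma mod_fact_add a n M : 1 <= n -> n <= M -> (a + fact M) mod n = a mod n.
Proof.
  intros H1 H2. destruct (n_div_fact n M H1 H2) as [q Hq]. rewrite Hq.
  apply Nat.Div0.mod_add.
Qed.
Lemma mod_fact0 n M : 1 <= n -> n <= M -> fact M mod n = 0.
Proof. intros. pose proof (mod_fact_add 0 n M H H0). simpl in H1. rewrite H1. apply Nat.Div0.mod_0_l. Qed.

Definition An (a : nat) : Prop :=
  a = 0 \/ (exists k, a = fact (S k) /\ forall s, Hb k s = 0) \/
  (exists j N, Hb j N = 1 /\ a = fact (S j) + fact (cnt j N + j + 2)).
Definition A (x : Z) : Prop := exists a, x = Z.of_nat a /\ An a.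

Lemma rep_halt j n : Hb j n = 1 -> rep j n = fact (S j) + fact (cnt j n + j + 2).
Proof. intros H. unfold rep. rewrite H. reflexivity. Qed.
Lemma rep_nohalt j n : Hb j n = 0 -> rep j n = fact (S j).
Proof. intros H. unfold rep. rewrite H. simpl. lia. Qed.

Lemma An_mod n r : 1 <= n ->
  ((exists a, An a /\ a mod n = r) <-> (r = 0 \/ exists j, j < n /\ modn (rep j n) n = r)).
Proof.
  intros Hn. split.
  - intros [a [Ha Hr]]. subst r.
    destruct Ha as [->|[[k [-> Hk]]|[j [N [HjN ->]]]]].
    + left. apply Nat.Div0.mod_0_l.
    + destruct (le_lt_dec n k).
      * left. apply mod_fact0; lia.
      * right. exists k. split; auto. rewrite modn_spec by lia. rewrite rep_nohalt; auto.
    + destruct (le_lt_dec n j).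
      * left. rewrite mod_fact_add by lia. apply mod_fact0; lia.
      * right. exists j. split; auto. rewrite modn_spec by lia.
        destruct (Hb01 j n) as [H0|H1].
        -- rewrite rep_nohalt by auto. rewrite mod_fact_add; auto. pose proof (cnt_lb j n N H0 HjN). lia.
        -- rewrite rep_halt by auto. rewrite (cnt_stable2 j N n); auto.
  - intros [->|[j [Hj Hr]]].
    + exists 0. split; [left; auto|]. apply Nat.Div0.mod_0_l.
    + rewrite modn_spec in Hr by lia. subst r.
      destruct (Hb01 j n) as [H0|H1].
      * rewrite rep_nohalt by auto.
        destruct (classic (forall s, Hb j s = 0)) as [Hall|Hex].
        -- exists (fact (S j)). split; auto. right; left. eauto.
        -- apply not_all_ex_not in Hex as [N HN].
           assert (HN1 : Hb j N = 1) by (destruct (Hb01 j N); tauto).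
           exists (fact (S j) + fact (cnt j N + j + 2)). split.
           ++ right; right. eauto.
           ++ rewrite mod_fact_add; auto. pose proof (cnt_lb j n N H0 HN1). lia.
      * exists (rep j n). split; auto. rewrite rep_halt by auto. right; right. eauto.
Qed.

Lemma setmod_iff n r : 1 <= n -> (set_mod A n r <-> r < n /\ memb r n = 1).
Proof.
  intros Hn. rewrite (proj1 (memb_spec r n)). rewrite <- An_mod by auto. unfold set_mod, A.
  split.
  - intros [Hr [x [[a [-> Ha]] Hm]]]. split; auto. exists a. split; auto.
    rewrite <- Nat2Z.inj_mod in Hm. lia.
  - intros [Hr [a [Ha Hm]]]. split; auto. exists (Z.of_nat a). split; [eauto|].
    rewrite <- Nat2Z.inj_mod. lia.
Qed.

Theorem mod_rec : recursive_mod_function A.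
Proof.
  exists c_F. intros n Hn. exists (sF n n). split; [apply eval_F|].
  intros r. rewrite testbit_sF, setmod_iff; tauto.
Qed.

Opaque pr.

Lemma L1 (x y P k t : Z) : (Z.abs x < P)%Z -> x <> 0%Z -> y = (x + P * k)%Z -> y = (P * t)%Z -> False.
Proof.
  intros H1 H2 H3 H4. assert (x = P * (t - k))%Z by lia.
  destruct (Z.lt_trichotomy (t - k) 0) as [h|[h|h]]; [nia|nia|nia].
Qed.
Lemma L2 (x s P q : Z) : (Z.abs x + Z.abs s < P)%Z -> x = (s + P * q)%Z -> x = s.
Proof.
  intros H1 H2. destruct (Z.lt_trichotomy q 0) as [h|[h|h]]; [nia|nia|nia].
Qed.

Lemma fact_big N a : a + 3 <= N -> a + 2 * fact (pred N) < fact N.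
Proof.
  intros H. destruct N as [|M]; [lia|]. simpl pred. change (fact (S M)) with (S M * fact M).
  pose proof (lt_O_fact M). nia.
Qed.

Lemma div_Z a b : Nat.divide a b -> exists t, Z.of_nat b = (Z.of_nat a * t)%Z.
Proof. intros [q ->]. exists (Z.of_nat q). lia. Qed.

Lemma closed_core x N : ~ A x -> Z.to_nat (Z.abs x) + 3 <= N ->
  (forall j N', Hb j N' = 1 -> x = Z.of_nat (fact (S j)) -> cnt j N' + j + 2 < N) ->
  forall y k, y = (x + Z.of_nat (fact N) * k)%Z -> ~ A y.
Proof.
  intros HnA HN Hc y k Hy HAy.
  set (P := Z.of_nat (fact N)) in *.
  assert (HP : (Z.abs x < P)%Z).
  { unfold P. pose proof (fact_le 1 N ltac:(lia)). assert (N <= fact N).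
    { destruct N; [lia|]. change (fact (S N)) with (S N * fact N). pose proof (lt_O_fact N). nia. }
    lia. }
  assert (Hx0 : x <> 0%Z). { intros ->. apply HnA. exists 0. split; auto. left; auto. }
  pose proof (fact_big N (Z.to_nat (Z.abs x)) HN) as Hbig.
  destruct HAy as [a [-> Ha]].
  destruct Ha as [->|[[k' [-> Hk']]|[j [N' [Hj ->]]]]].
  - apply (L1 x 0 P k 0); auto; lia.
  - destruct (le_lt_dec N (S k')).
    + destruct (div_Z _ _ (fact_div_fact N (S k') l)) as [t Ht].
      apply (L1 x (Z.of_nat (fact (S k'))) P k t); auto.
    + pose proof (fact_le (S k') (pred N) ltac:(lia)).
      assert (x = Z.of_nat (fact (S k'))).
      { apply (L2 x _ P (-k)); [|lia]. rewrite (Z.abs_eq (Z.of_nat _)) by lia. fold P in HP. lia. }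
      apply HnA. exists (fact (S k')). split; auto. right; left. eauto.
  - set (T := cnt j N' + j + 2) in *.
    destruct (le_lt_dec N (S j)).
    + destruct (div_Z _ _ (fact_div_fact N (S j) l)) as [t1 Ht1].
      destruct (div_Z _ _ (fact_div_fact N T ltac:(lia))) as [t2 Ht2].
      apply (L1 x (Z.of_nat (fact (S j) + fact T)) P k (t1 + t2)); auto. rewrite Nat2Z.inj_add. fold P in Ht1, Ht2. lia.
    + destruct (le_lt_dec N T).
      * destruct (div_Z _ _ (fact_div_fact N T l0)) as [t2 Ht2]. fold P in Ht2.
        pose proof (fact_le (S j) (pred N) ltac:(lia)).
        assert (x = Z.of_nat (fact (S j))).
        { apply (L2 x _ P (t2 - k)); [|rewrite Nat2Z.inj_add in Hy; lia].
          rewrite (Z.abs_eq (Z.of_nat _)) by lia. lia. }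
        specialize (Hc j N' Hj H0). fold T in Hc. lia.
      * pose proof (fact_le (S j) (pred N) ltac:(lia)).
        pose proof (fact_le T (pred N) ltac:(lia)).
        assert (x = Z.of_nat (fact (S j) + fact T)).
        { apply (L2 x _ P (-k)); [|lia]. rewrite (Z.abs_eq (Z.of_nat _)) by lia. lia. }
        apply HnA. exists (fact (S j) + fact T). split; auto. right; right. eauto.
Qed.

Theorem closedA : profinite_closed A.
Proof.
  intros x HnA.
  assert (HN : exists N, Z.to_nat (Z.abs x) + 3 <= N /\
     (forall j N', Hb j N' = 1 -> x = Z.of_nat (fact (S j)) -> cnt j N' + j + 2 < N)).
  { destruct (classic (exists j0 N0, Hb j0 N0 = 1 /\ x = Z.of_nat (fact (S j0)))) as [[j0 [N0 [H1 H2]]]|Hn].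
    - exists (Z.to_nat (Z.abs x) + 3 + (cnt j0 N0 + j0 + 3)). split; [lia|].
      intros j N' Hj Hx. rewrite H2 in Hx. apply Nat2Z.inj, fact_S_inj in Hx. subst j.
      rewrite (cnt_stable2 j0 N0 N'); auto. lia.
    - exists (Z.to_nat (Z.abs x) + 3). split; [lia|]. intros j N' Hj Hx. exfalso; apply Hn; eauto. }
  destruct HN as [N [HN1 HN2]].
  exists x, (Z.of_nat (fact N)). split; [pose proof (lt_O_fact N); lia|]. split.
  - exists 0%Z. lia.
  - intros y [k Hk]. apply (closed_core x N HnA HN1 HN2 y k Hk).
Qed.

Lemma A_F k : A (Z.of_nat (fact (S k))) <-> forall s, Hb k s = 0.
Proof.
  split.
  - intros [a [Ha HA]]. apply Nat2Z.inj in Ha. subst a.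
    destruct HA as [H|[[k' [H1 H2]]|[j [N [H1 H2]]]]].
    + pose proof (lt_O_fact (S k)). lia.
    + apply fact_S_inj in H1. subst; auto.
    + exfalso. symmetry in H2. revert H2. apply fact_sum_ne. lia.
  - intros H. exists (fact (S k)). split; auto. right; left; eauto.
Qed.

Lemma Ret_inj y y' : Ret y 0 = Ret y' 0 -> y = y'.
Proof.
  unfold Ret. intros H. apply (f_equal (fun s => fst' (snd' s))) in H. rewrite !snd_pr, !fst_pr in H. auto.
Qed.

Theorem not_rec : ~ recursive_set A.
Proof.
  intros [c Hc]. set (k := enc c).
  specialize (Hc (Z.of_nat (fact (S k)))).
  assert (Hz : z2n (Z.of_nat (fact (S k))) = 2 * fact (S k)).
  { unfold z2n. pose proof (lt_O_fact (S k)). destruct (0 <=? Z.of_nat (fact (S k)))%Z eqn:E.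
    - lia.
    - apply Z.leb_gt in E. lia. }
  rewrite Hz in Hc.
  assert (Hrun : forall y, eval c [2 * fact (S k)] y -> exists n, run (init k) n = Ret y 0).
  { intros y Hy. apply (complete _ _ _ Hy 0). }
  destruct (classic (A (Z.of_nat (fact (S k))))) as [HA|HA].
  - destruct (Hrun 1 (proj1 Hc HA)) as [n Hn].
    pose proof (proj1 (A_F k) HA n). apply (proj1 (Hb_spec k n)) in Hn.
    lia.
  - destruct (Hrun 0 (proj2 Hc HA)) as [n0 Hn0].
    rewrite A_F in HA. apply not_all_ex_not in HA as [s Hs].
    assert (Hs1 : Hb k s = 1) by (destruct (Hb01 k s); tauto).
    apply (proj1 (Hb_spec k s)) in Hs1.
    pose proof (run_after _ _ _ (max n0 s) Hn0 ltac:(lia)).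
    pose proof (run_after _ _ _ (max n0 s) Hs1 ltac:(lia)).
    rewrite H in H0. apply Ret_inj in H0. discriminate.
Qed.

Theorem mainTheorem18 :
  exists A : Z -> Prop,
    ~ recursive_set A /\ profinite_closed A /\ recursive_mod_function A.
Proof. exists A. split; [apply not_rec|split; [apply closedA|apply mod_rec]]. Qed.
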